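(* Let $G$ be a finite simple graph on $n$ vertices having $t\geq 2$ cut vertices. Then $\mathrm{nRel}(G;p)$ has at least one fixed point in $(0,1)$, i.e. there exists $p\in(0,1)$ with $\mathrm{nRel}(G;p)=p$.
   Context: For a graph $G$ on $n$ vertices, a connected set is a nonempty vertex subset $C$ such that the induced subgraph $G[C]$ is connected. The node reliability of $G$ is the polynomial \[ \mathrm{nRel}(G;p)=\sum_{C}p^{|C|}(1-p)^{n-|C|}, \] the sum over all connected sets $C$ of $G$. *)

(* Defs.v *)
From HB Require Import structures.
From mathcomp Require Import all_boot all_order all_algebra.
From mathcomp Require Import reals.
Set Implicit Arguments. Unset Strict Implicit. Unset Printing Implicit Defensive.
Import Order.TTheory GRing.Theory Num.Theory.

Definition simple_graph (T : finType) (e : rel T) : Prop :=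
  symmetric e /\ irreflexive e.

Definition induced (T : finType) (e : rel T) (S : {set T}) : rel T :=
  [rel x y | [&& x \in S, y \in S & e x y]].

Definition connected_set (T : finType) (e : rel T) (C : {set T}) : bool :=
  (C != set0) && [forall x in C, forall y in C, connect (induced e C) x y].

Definition ncomp (T : finType) (e : rel T) (S : {set T}) : nat :=
  #|[set [set y in S | connect (induced e S) x y] | x in S]|.

Definition cut_vertex (T : finType) (e : rel T) (v : T) : bool :=
  ncomp e [set: T] < ncomp e [set~ v].

Local Open Scope ring_scope.

Definition nRel (R : realType) (T : finType) (e : rel T) (p : R) : R :=
  \sum_(C : {set T} | connected_set e C) p ^+ #|C| * (1 - p) ^+ (#|T| - #|C|).

(* Main.v *)
Require Import Defs.
From HB Require Import structures.
From mathcomp Require Import all_boot all_order all_algebra.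
From mathcomp Require Import reals.
From mathcomp Require Import ring lra zify.
Import Order.TTheory GRing.Theory Num.Theory.
Local Open Scope ring_scope.

Section H.
Variable R : realType.

Lemma sum_all (T : finType) (p : R) :
  \sum_(C : {set T}) p ^+ #|C| * (1 - p) ^+ (#|T| - #|C|) = 1.
transitivity (\big[ *%R/1]_(i : T) (p + (1 - p))); last first.
  by rewrite addrC subrK big1_eq.
rewrite bigA_distr.
apply: eq_bigr => J _; symmetry.
rewrite (bigID (mem J)) /=.
rewrite (eq_bigr (fun _ => p)); last by move=> i ->.
rewrite [X in _ * X](eq_bigr (fun _ => 1 - p)); last by move=> i /negbTE ->.

rewrite !prodr_const; congr (_ * _ ^+ _); rewrite -(cardC J) addKn; by apply: eq_card => i; rewrite !inE.

Qed.

Lemma sub_sum_le (I : finType) (P Q : pred I) (F : I -> R) :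
  (forall i, Q i -> P i) -> (forall i, P i -> 0 <= F i) ->
  \sum_(i | Q i) F i <= \sum_(i | P i) F i.
Proof.
move=> QP F0; rewrite (bigID Q P) /=.
have -> : \sum_(i | P i && Q i) F i = \sum_(i | Q i) F i.
  by apply: eq_bigl => i; case Qi: (Q i); rewrite ?andbT ?andbF ?QP.
rewrite lerDl; apply: sumr_ge0 => i /andP[Pi _]; exact: F0.
Qed.

Lemma bern (a : R) (m : nat) : 0 <= a <= 1 -> 1 - m%:R * a <= (1 - a) ^+ m.
Proof.
move=> /andP[a0 a1]; elim: m => [|m IH]; first by rewrite mul0r subr0 expr0.
rewrite exprSr.
have h : (1 - m%:R * a) * (1 - a) <= (1 - a) ^+ m * (1 - a).
  by apply: ler_wpM2r; lra.
apply: (le_trans _ h); rewrite -natr1.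
have : 0 <= m%:R * a * a by apply: mulr_ge0 => //; apply: mulr_ge0.
nra.
Qed.

Lemma cut_not_conn (T : finType) (e : rel T) v :
  cut_vertex e v -> ~~ connected_set e [set~ v].
Proof.
rewrite /cut_vertex /ncomp => lt; apply/negP => /andP[ne H].
set S := [set~ v] in lt H ne.
have h1 : (#|[set [set y in S | connect (induced e S) x y] | x in S]| <= 1)%N.
  rewrite -(cards1 S); apply: subset_leq_card; apply/subsetP => _ /imsetP[x xS ->].
  rewrite inE; apply/eqP/setP => y; rewrite inE; case yS: (y \in S) => //=.
  exact: (forall_inP (forall_inP H x xS) y yS).
have h0 : (0 < #|[set [set y in [set: T] | connect (induced e [set: T]) x y] | x in [set: T]]|)%N.
  rewrite card_gt0; apply/set0Pn; eexists; apply/imsetP; exists v; first by rewrite inE.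
  reflexivity.
move: lt h1 h0; set a := #|_|; set b := #|_|; lia.
Qed.

Lemma conn1 (T : finType) (e : rel T) x : connected_set e [set x].
Proof.
rewrite /connected_set; apply/andP; split.
  by apply/set0Pn; exists x; rewrite inE.
apply/forall_inP => y; rewrite inE => /eqP->; apply/forall_inP => z; rewrite inE => /eqP->.
exact: connect0.
Qed.

Lemma lower (T : finType) (e : rel T) (p : R) : 0 <= p <= 1 ->
  #|T|%:R * (p * (1 - p) ^+ (#|T| - 1)) <= nRel e p.
Proof.
move=> /andP[p0 p1]; rewrite /nRel.
have H := @sub_sum_le _ (connected_set e) (fun C => #|C| == 1%N)
  (fun C => p ^+ #|C| * (1 - p) ^+ (#|T| - #|C|)).
rewrite big_cards1 in H; apply: le_trans (H _ _).
- rewrite (eq_bigr (fun _ => p * (1 - p) ^+ (#|T| - 1))); last by move=> i _; rewrite cards1 expr1.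
  by rewrite sumr_const mulr_natl.
- by move=> C /cards1P[x ->]; exact: conn1.
- by move=> C _; apply: mulr_ge0; apply: exprn_ge0; lra.
Qed.

Lemma upper (T : finType) (e : rel T) (p : R) : 0 <= p <= 1 -> (0 < #|T|)%N ->
  nRel e p + #|[set v | cut_vertex e v]|%:R * (p ^+ (#|T| - 1) * (1 - p)) <= 1.
Proof.
move=> /andP[p0 p1] n0; rewrite /nRel.
set F := fun C : {set T} => p ^+ #|C| * (1 - p) ^+ (#|T| - #|C|).
set Cut := [set v | cut_vertex e v].
set Img := [set [set~ v] | v in Cut].
have E1 : \sum_(C in Img) F C = #|Cut|%:R * (p ^+ (#|T| - 1) * (1 - p)).
  rewrite big_imset /=; last first.
    by move=> x y _ _ /setC_inj /set1_inj.
  rewrite (eq_bigr (fun _ => p ^+ (#|T| - 1) * (1 - p))).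
    by rewrite sumr_const mulr_natl.
  move=> i _; rewrite /F cardsC1 subn1; congr (_ * _).
  by rewrite -subn1 subKn // expr1.
rewrite -E1.
have E2 : \sum_(C | connected_set e C) F C + \sum_(C in Img) F C =
          \sum_(C | connected_set e C || (C \in Img)) F C.
  rewrite (bigID (connected_set e) (fun C => connected_set e C || (C \in Img))) /=.
  congr (_ + _); apply: eq_bigl => C.
    by case: (connected_set e C); rewrite ?andbT ?andbF.
  case CI: (C \in Img); last by rewrite orbF andbN.
  rewrite orbT /=.
  move: CI => /imsetP[v]; rewrite inE => cv ->.
  by rewrite (negbTE (@cut_not_conn _ _ _ cv)).
rewrite E2; apply: (le_trans (y := \sum_(C : {set T}) F C)); last by rewrite sum_all.
apply: sub_sum_le => // C _.
by apply: mulr_ge0; apply: exprn_ge0; lra.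
Qed.
End H.

Lemma hornerQ (R : realType) (T : finType) (e : rel T) (x : R) :
  ('X - \sum_(C : {set T} | connected_set e C) 'X^#|C| * (1 - 'X) ^+ (#|T| - #|C|)).[x]
  = x - nRel e x.
Proof.
rewrite hornerD hornerN hornerX horner_sum /nRel; congr (_ - _).
apply: eq_bigr => C _; by rewrite hornerM hornerXn horner_exp hornerD hornerN hornerX hornerC.
Qed.

Theorem corollary4p2 (R : realType) (T : finType) (e : rel T) :
  simple_graph e ->
  (2 <= #|[set v | cut_vertex e v]|)%N ->
  exists p : R, 0 < p < 1 /\ nRel e p = p.
Proof.
move=> _ t2.
set t := #|_| in t2.
have nt : (t <= #|T|)%N by apply: max_card.
set n := #|T| in nt.
have n2 : (2 <= n)%N by apply: leq_trans nt.
set N : R := n%:R.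
have N2 : 2 <= N by rewrite /N ler_nat.
have N1 : (n - 1)%:R = N - 1 by rewrite natrB // ltnW.
have T2 : 2 <= t%:R :> R by rewrite ler_nat.
have NE : n%:R = N by [].
clearbody N.
set a : R := (N *+ 2)^-1.
set c : R := (N *+ 4)^-1.
have Na : N * a = 2^-1.
  rewrite /a -mulr_natr; field; apply/eqP => h; lra.
have Nc : N * c = 4^-1.
  rewrite /c -mulr_natr; field; apply/eqP => h; lra.
have a0 : 0 < a by rewrite /a invr_gt0; lra.
have c0 : 0 < c by rewrite /c invr_gt0; lra.
have a1 : a <= 4^-1.
  have : N * a <= N * 4^-1 by rewrite Na; lra.
  by rewrite ler_pM2l //; lra.
have c1 : c <= 8^-1.
  have : N * c <= N * 8^-1 by rewrite Nc; lra.
  by rewrite ler_pM2l //; lra.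
pose Q : {poly R} := ('X - \sum_(C : {set T} | connected_set e C) 'X^#|C| * (1 - 'X) ^+ (#|T| - #|C|)).
have Qa : Q.[a] <= 0.
  rewrite hornerQ subr_le0.
  have ab : 0 <= a <= 1 by apply/andP; split; lra.
  apply: (le_trans _ (@lower R T e a ab)); rewrite -/n NE.
  have := @bern R a (n - 1) ab; rewrite N1 => hb.
  set y := (1 - a) ^+ (n - 1) in hb *.
  rewrite mulrA (mulrC N) -mulrA.
  have : N * y >= N * (1 - (N - 1) * a) by rewrite ler_pM2l //; lra.
  have -> : N * (1 - (N - 1) * a) = N - (N * a) * N + N * a by ring.
  rewrite Na => h.
  have : a * (N - 2^-1 * N + 2^-1) <= a * (N * y) by rewrite ler_pM2l.
  nra.
have Qb : 0 <= Q.[1 - c].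
  rewrite hornerQ subr_ge0.
  have cb : 0 <= 1 - c <= 1 by apply/andP; split; lra.
  have := @upper R T e (1 - c) cb; rewrite -/n -/t.
  have n0 : (0 < n)%N by apply: leq_trans n2.
  move=> /(_ n0).
  have hb : 1 - (N - 1) * c <= (1 - c) ^+ (n - 1).
    by rewrite -N1; apply: bern; apply/andP; split; lra.
  set z := (1 - c) ^+ (n - 1) in hb *.
  have : N * z >= N * (1 - (N - 1) * c) by rewrite ler_pM2l //; lra.
  have -> : N * (1 - (N - 1) * c) = N - (N * c) * N + N * c by ring.
  rewrite Nc => h.
  have z34 : z >= 3 / 4.
    have : N * (3/4) <= N * z by lra.
    by rewrite ler_pM2l //; lra.
  have : t%:R * z >= 3/2 by nra.
  nra.
have ab : a <= 1 - c by lra.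
have [x /andP[xa xb] rx] := poly_ivt ab (introT andP (conj Qa Qb)).
exists x; split; first by apply/andP; split; lra.
move: rx; rewrite /root hornerQ subr_eq0 => /eqP h; by rewrite -h.
Qed.
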